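(* Let $N=[n]$, let $v:2^N\to\mathbb{R}_+$ be any monotone valuation with $v(\emptyset)=0$, let $c\in\mathbb{R}^n_+$ be a vector of service costs, and let $X$ be an up-consistent decision map for $v$. Then for every $\epsilon>0$ there exists an $\epsilon$-Nash equilibrium $p$ of the pricing game with costs defined by $v$, $c$ and $X$ such that $X(p)=X(c)$.
   Context: Pricing game with service costs: $N=[n]$ services, service $i$ controlled by seller $i$, who has cost $c_i\ge0$ for providing it. Buyer valuation $v:2^N\to\mathbb{R}_+$, monotone, $v(\emptyset)=0$. For $p\in\mathbb{R}^n_+$, $p(S)=\sum_{j\in S}p_j$, $D(v;p)=\arg\max_{S\subseteq N}(v(S)-p(S))$. A decision map is $X:\mathbb{R}^n_+\to2^N$ with $X(p)\in D(v;p)$ for all $p$. $X$ is up-consistent if for every $p$ with $X(p)=S$, every $i$ and every $p_i'>p_i$, either $X(p_i',p_{-i})=S$ or $i\notin X(p_i',p_{-i})$. Seller $i$'s utility is $u_i(p)=(p_i-c_i)\mathbf{1}\{i\in X(p)\}$. An $\epsilon$-Nash equilibrium is a $p\in\mathbb{R}^n_+$ with $u_i(p)\ge u_i(p_i',p_{-i})-\epsilon$ for all $i$ and $p_i'\in\mathbb{R}_+$. *)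

(* Defs.v *)
From mathcomp Require Import all_boot all_order all_algebra.
From mathcomp Require Import reals.
Set Implicit Arguments. Unset Strict Implicit. Unset Printing Implicit Defensive.
Import Order.TTheory GRing.Theory Num.Theory.
Local Open Scope ring_scope.

Section PricingGame.
Variables (R : realType) (n : nat).

Definition nonneg_vec (p : 'I_n -> R) : Prop := forall i, 0 <= p i.

Definition valuation (v : {set 'I_n} -> R) : Prop :=
  [/\ v set0 = 0, (forall S : {set 'I_n}, 0 <= v S) & (forall S T : {set 'I_n}, S \subset T -> v S <= v T)].

Definition psum (p : 'I_n -> R) (S : {set 'I_n}) : R := \sum_(j in S) p j.

Definition in_demand (v : {set 'I_n} -> R) (p : 'I_n -> R) (S : {set 'I_n}) : Prop :=
  forall T : {set 'I_n}, v T - psum p T <= v S - psum p S.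

Definition upd (p : 'I_n -> R) (i : 'I_n) (x : R) : 'I_n -> R :=
  fun j => if j == i then x else p j.

(* X : R^n_+ -> 2^N with X(p) \in D(v;p); X is given on all of 'I_n -> R
   but only its values on nonnegative price vectors are constrained/used. *)
Definition decision_map (v : {set 'I_n} -> R) (X : ('I_n -> R) -> {set 'I_n}) : Prop :=
  forall p, nonneg_vec p -> in_demand v p (X p).

Definition up_consistent (X : ('I_n -> R) -> {set 'I_n}) : Prop :=
  forall p, nonneg_vec p -> forall (i : 'I_n) (x : R), p i < x ->
    X (upd p i x) = X p \/ i \notin X (upd p i x).

Definition utility (X : ('I_n -> R) -> {set 'I_n}) (c : 'I_n -> R)
  (i : 'I_n) (p : 'I_n -> R) : R :=
  if i \in X p then p i - c i else 0.

Definition eps_nash (X : ('I_n -> R) -> {set 'I_n}) (c : 'I_n -> R) (eps : R)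
  (p : 'I_n -> R) : Prop :=
  nonneg_vec p /\
  forall (i : 'I_n) (x : R), 0 <= x ->
    utility X c i (upd p i x) - eps <= utility X c i p.

End PricingGame.

(* Main.v *)
Require Import Defs.
From mathcomp Require Import all_boot all_order all_algebra.
From mathcomp Require Import reals.
From Stdlib Require Import Classical.
From mathcomp Require Import lra.
Import Order.TTheory GRing.Theory Num.Theory.
Local Open Scope ring_scope.

Lemma psum_upd (R : realType) (n : nat) (p : 'I_n -> R) (S : {set 'I_n}) i x :
  i \in S -> psum (upd p i x) S = psum p S + (x - p i).
Proof.
move=> iS; rewrite /psum (bigD1 i iS) [in RHS](bigD1 i iS) /= /upd eqxx.
have -> : \sum_(j in S | j != i) (if j == i then x else p j) =
          \sum_(j in S | j != i) p j.
  by apply: eq_bigr => j /andP[_ /negbTE ->].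
lra.
Qed.

Theorem mainTheorem11 (R : realType) (n : nat)
  (v : {set 'I_n} -> R) (c : 'I_n -> R) (X : ('I_n -> R) -> {set 'I_n}) :
  valuation v -> nonneg_vec c -> decision_map v X -> up_consistent X ->
  forall eps : R, 0 < eps ->
    exists p : 'I_n -> R, eps_nash X c eps p /\ X p = X c.
Proof.
move=> [v0 vge0 vmon] c0 HX Hup eps eps0.
set S := X c.
have key : forall k : nat, forall p : 'I_n -> R,
  nonneg_vec p -> X p = S -> (forall j, c j <= p j) ->
  (forall j, j \notin S -> p j = c j) ->
  v S - psum p S < k%:R * eps ->
  exists q, eps_nash X c eps q /\ X q = S.
  elim=> [|k IH] p pnn XpS pc pout hk.
    have := HX p pnn set0; rewrite /psum big_set0 v0 subr0 -XpS.
    by move: hk; rewrite mul0r XpS => hk /(le_lt_trans)/(_ hk); rewrite ltxx.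
  have uge0 : forall i, 0 <= utility X c i p.
    move=> i; rewrite /utility; case: ifP => _ //; by rewrite subr_ge0.
  case: (classic (exists i x, 0 <= x /\
             utility X c i p < utility X c i (upd p i x) - eps)).
    move=> [i [x [x0 hlt]]].
    have hin : i \in X (upd p i x).
      apply/negPn/negP => hni; move: hlt; rewrite /utility (negbTE hni).
      have := uge0 i; rewrite /utility => h1 h2.
      have : 0 - eps < 0 by rewrite sub0r oppr_lt0.
      by move=> h3; have := lt_le_trans h2 (le_trans (ltW h3) h1); rewrite ltxx.
    have hux : utility X c i (upd p i x) = x - c i by rewrite /utility hin /upd eqxx.
    rewrite hux in hlt.
    have xgt : p i < x.
      rewrite ltNge; apply/negP => hxp.
      case hi: (i \in X p).
        move: hlt; rewrite /utility hi => h.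
        have : x - c i - eps < x - c i by rewrite ltrBlDr ltrDl.
        move=> h'; have := lt_trans h (lt_le_trans h' (lerB hxp (lexx _))).
        by rewrite ltxx.
      have pic : p i = c i by apply: pout; rewrite -XpS hi.
      move: hlt; rewrite /utility hi => h.
      have : x - c i - eps < 0 by rewrite ltrBlDr add0r; apply: le_lt_trans eps0;
        rewrite subr_le0 -pic.
      by move=> h'; have := lt_trans h h'; rewrite ltxx.
    have Xeq : X (upd p i x) = X p.
      case: (Hup p pnn i x xgt) => // hni; by rewrite hin in hni.
    have iS : i \in S by rewrite -XpS -Xeq.
    have hi : i \in X p by rewrite XpS.
    move: hlt; rewrite /utility hi => hlt.
    have xbig : p i + eps < x.
      by lra.
    apply: (IH (upd p i x)).
    - move=> j; rewrite /upd; case: ifP => _ //.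
    - by rewrite Xeq.
    - move=> j; rewrite /upd; case: eqP => [->|_] //.
      exact: le_trans (pc i) (ltW xgt).
    - move=> j jS; rewrite /upd; case: eqP => [ej|_]; last exact: pout.
      by rewrite ej iS in jS.
    - rewrite psum_upd //.
      move: hk; rewrite -natr1 mulrDl mul1r => hk.
      lra.
  move=> hno; exists p; split => //; split => // i x x0.
  rewrite leNgt; apply/negP => h; apply: hno; exists i, x; split => //.
have [k hk] : exists k : nat, v S - psum c S < k%:R * eps.
  exists (Num.bound (`|v S - psum c S| / eps)).
  rewrite -ltr_pdivrMr //; apply: le_lt_trans (archi_boundP _).
    by apply: ler_wpM2r; [rewrite invr_ge0 ltW | apply: real_ler_norm; apply: num_real].
  by rewrite divr_ge0 // ltW.
apply: (key k c) => //.
Qed.
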